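(* Let $a,b\ge1$ be integers with $|a-b|\le4$ and let $n=a+b+2$. Then $\operatorname{diam}(\mathcal{C}_3(S(a,b)))=\lfloor 3n/2\rfloor$.
   Context: The double star $S(a,b)$ is the tree obtained by joining the centers of the stars $K_{1,a}$ and $K_{1,b}$ by an edge; it has $a+b+2$ vertices. A proper 3-coloring of a tree $T=(V,E)$ is a map $f\colon V\to\mathbb{Z}/3\mathbb{Z}$ with $f(u)\neq f(v)$ for every edge $uv\in E$. The 3-coloring graph $\mathcal{C}_3(T)$ has the proper 3-colorings as vertices, two colorings adjacent iff they differ at exactly one vertex; $\operatorname{diam}$ denotes graph diameter. *)

(* Defs.v *)
From mathcomp Require Import all_boot all_algebra.
Set Implicit Arguments. Unset Strict Implicit. Unset Printing Implicit Defensive.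

(* Double star S(a,b) on vertex set 'I_(a+b+2):
   vertex 0 = centre of K_{1,a}, vertex 1 = centre of K_{1,b},
   leaves 2 .. a+1 attached to 0, leaves a+2 .. a+b+1 attached to 1. *)
Definition dstar_adj0 (a : nat) (u v : nat) : bool :=
  [|| (u == 0) && (v == 1),
      (u == 0) && (2 <= v < a + 2)
    | (u == 1) && (a + 2 <= v)].

Definition double_star (a b : nat) : rel 'I_(a + b + 2) :=
  fun u v => dstar_adj0 a u v || dstar_adj0 a v u.
Arguments double_star : clear implicits.

Definition proper3 (T : finType) (e : rel T) (f : {ffun T -> 'Z_3}) : bool :=
  [forall u, forall v, e u v ==> (f u != f v)].

Definition col_adj (T : finType) (e : rel T) : rel {ffun T -> 'Z_3} :=
  fun f g => [&& proper3 e f, proper3 e g & #|[set x | f x != g x]| == 1].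

Definition dist_le (V : finType) (r : rel V) (x y : V) (k : nat) : Prop :=
  exists p : seq V, [/\ path r x p, last x p = y & size p <= k].

Definition diam_eq (V : finType) (P : pred V) (r : rel V) (D : nat) : Prop :=
  (forall x y, P x -> P y -> dist_le r x y D) /\
  (exists x y, [/\ P x, P y & forall k, k < D -> ~ dist_le r x y k]).

(* Main.v *)
Require Import Defs.
From mathcomp Require Import all_boot all_algebra.
From mathcomp Require Import zify.
Set Implicit Arguments. Unset Strict Implicit. Unset Printing Implicit Defensive.


Definition z0 : 'Z_3 := 0%R.
Definition z1 : 'Z_3 := 1%R.
Definition z2 : 'Z_3 := 2%:R%R.
Definition third (x y : 'Z_3) : 'Z_3 := (- (x + y))%R.

Definition allZ3 (P : 'Z_3 -> bool) := [&& P z0, P z1 & P z2].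
Lemma allZ3P (P : 'Z_3 -> bool) : allZ3 P -> forall x, P x.
Proof.
case/and3P=> P0 P1 P2 [[|[|[|m]]] Hm] //.
- by rewrite (_ : Ordinal _ = z0) //; apply: val_inj.
- by rewrite (_ : Ordinal _ = z1) //; apply: val_inj.
- by rewrite (_ : Ordinal _ = z2) //; apply: val_inj.
Qed.
Definition allB (P : bool -> bool) := P false && P true.
Lemma allBP P : allB P -> forall s, P s.
Proof. by case/andP=> ? ? []. Qed.

Lemma third_fact : allZ3 (fun x : 'Z_3 => allZ3 (fun y : 'Z_3 =>
   (x != y) ==> (third x y != x) && (third x y != y))).
Proof. by []. Qed.
Lemma thirdP (x y : 'Z_3) : x != y -> third x y != x /\ third x y != y.
Proof. move=> H; move: (allZ3P (allZ3P third_fact x) y); rewrite H /=; by case/andP. Qed.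

Lemma three_fact : allZ3 (fun x : 'Z_3 => allZ3 (fun x' : 'Z_3 => allZ3 (fun u : 'Z_3 => allZ3 (fun y : 'Z_3 =>
  [&& x != x', u != x, u != x', y != x & y != x'] ==> (u == y))))).
Proof. by []. Qed.
Lemma threeP (x x' u y : 'Z_3) : x != x' -> u != x -> u != x' -> y != x -> y != x' -> u = y.
Proof.
move=> H1 H2 H3 H4 H5; apply/eqP.
by move: (allZ3P (allZ3P (allZ3P (allZ3P three_fact x) x') u) y); rewrite H1 H2 H3 H4 H5.
Qed.

Section Dist.
Lemma dist_refl (V : finType) (r : rel V) x : dist_le r x x 0.
Proof. by exists [::]. Qed.
Lemma dist_trans (V : finType) (r : rel V) x y z k1 k2 :
  dist_le r x y k1 -> dist_le r y z k2 -> dist_le r x z (k1 + k2).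
Proof.
case=> p1 [H1 L1 S1] [p2 [H2 L2 S2]]; exists (p1 ++ p2); split.
- by rewrite cat_path H1 L1 H2.
- by rewrite last_cat L1.
- by rewrite size_cat leq_add.
Qed.
Lemma dist_mono (V : finType) (r : rel V) x y k1 k2 :
  k1 <= k2 -> dist_le r x y k1 -> dist_le r x y k2.
Proof. move=> H [p [H1 H2 H3]]; exists p; split => //; exact: leq_trans H. Qed.
Lemma dist_one (V : finType) (r : rel V) x y : r x y -> dist_le r x y 1.
Proof. by move=> H; exists [:: y]; rewrite /= H. Qed.
End Dist.

Lemma N0 a b : 0 < a + b + 2. Proof. by rewrite addn2. Qed.
Lemma N1 a b : 1 < a + b + 2. Proof. by rewrite addn2. Qed.
Definition c0 a b : 'I_(a+b+2) := Ordinal (N0 a b).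
Definition c1 a b : 'I_(a+b+2) := Ordinal (N1 a b).
Definition cen a b (v : 'I_(a+b+2)) := if v < a + 2 then c0 a b else c1 a b.
Arguments c0 {a b}. Arguments c1 {a b}.
Notation colr a b := {ffun 'I_(a+b+2) -> 'Z_3}.

Lemma eq_c0 a b (v : 'I_(a+b+2)) : (val v == 0) -> v = c0.
Proof. by move=> /eqP H; apply: val_inj. Qed.
Lemma eq_c1 a b (v : 'I_(a+b+2)) : (val v == 1) -> v = c1.
Proof. by move=> /eqP H; apply: val_inj. Qed.

Definition prop a b (f : colr a b) :=
  f c0 != f c1 /\ forall v : 'I_(a+b+2), 2 <= v -> f v != f (cen v).

Lemma proper3P a b (f : colr a b) : proper3 (double_star a b) f <-> prop f.
Proof.
split.
- move/forallP=> H.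
  have H' u v : double_star a b u v -> f u != f v.
    by move=> e; exact: (implyP (forallP (H u) v) e).
  split; first by apply: H'.
  move=> v h2; rewrite eq_sym; apply: H'; rewrite /cen; case: ifP => hv;
    rewrite /double_star /dstar_adj0 /=; move: hv h2; lia.
- case=> H01 Hl; apply/forallP=> u; apply/forallP=> v; apply/implyP.
  have key (x y : 'I_(a+b+2)) : dstar_adj0 a x y -> f x != f y.
    rewrite /dstar_adj0; case/or3P=> /andP [hx hy].
    + by rewrite (eq_c0 hx) (eq_c1 hy).
    + have hy2 : 2 <= y by case/andP: hy.
      have := Hl y hy2; rewrite /cen; case/andP: hy => _ -> .
      by rewrite (eq_c0 hx) eq_sym.
    + have hy2 : 2 <= y by apply: leq_trans hy; rewrite leq_addl.
      have := Hl y hy2; rewrite /cen ltnNge hy /=.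
      by rewrite (eq_c1 hx) eq_sym.
  by rewrite /double_star; case/orP=> /key //; rewrite eq_sym.
Qed.


Lemma sum_card (T : finType) (P : pred T) :
  \sum_(v : T) (P v : nat) = #|[set v | P v]|.
Proof.
rewrite -sum1_card [RHS]big_mkcond /=; apply: eq_bigr => i _; rewrite inE; by case: (P i).
Qed.

Lemma cen_eq a b (h h' : colr a b) u : h c0 = h' c0 -> h c1 = h' c1 -> h (cen u) = h' (cen u).
Proof. by rewrite /cen; case: ifP. Qed.

Lemma leaves_dist a b (h h' : colr a b) : prop h -> prop h' ->
  h c0 = h' c0 -> h c1 = h' c1 ->
  dist_le (col_adj (double_star a b)) h h' (\sum_v (h v != h' v)).
Proof.
move=> Ph Ph' E0 E1.
move Ek: (\sum_v _) => k.
elim: k h Ph E0 E1 Ek => [|k IH] h Ph E0 E1 Ek.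
- have -> : h = h'.
    apply/ffunP=> v; apply/eqP; apply: contraT => hv.
    by move: Ek; rewrite (bigD1 v) //= hv.
  exact: dist_refl.
- case: (pickP (fun v => h v != h' v)) => [v hv|H0]; last first.
    by move: Ek; rewrite big1 // => i _; rewrite H0.
  set h1 : colr a b := [ffun u => if u == v then h' v else h u].
  have vnc0 : v != c0 by apply/eqP => e; move: hv; rewrite e E0 eqxx.
  have vnc1 : v != c1 by apply/eqP => e; move: hv; rewrite e E1 eqxx.
  have E0' : h1 c0 = h' c0 by rewrite ffunE eq_sym (negbTE vnc0).
  have E1' : h1 c1 = h' c1 by rewrite ffunE eq_sym (negbTE vnc1).
  have Ph1 : prop h1.
    split; first by rewrite E0' E1'; case: Ph'.
    move=> u hu; rewrite !ffunE.
    have -> : (cen u == v) = false.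
      by rewrite /cen; case: ifP => _; apply/negbTE; rewrite eq_sym.
    case: (u =P v) => [e|_].
      by subst u; rewrite (cen_eq v E0 E1); case: Ph' => _; apply.
    by case: Ph => _; apply.
  have A1 : col_adj (double_star a b) h h1.
    rewrite /col_adj; apply/and3P; split; [exact/proper3P | exact/proper3P |].
    have -> : [set x | h x != h1 x] = [set v].
      apply/setP=> u; rewrite !inE ffunE; case: (u =P v) => [->|]; rewrite ?eqxx ?hv //.
    by rewrite cards1.
  have Ek1 : \sum_u (h1 u != h' u) = k.
    have e1 : \sum_u (h u != h' u) = 1 + \sum_(u | u != v) (h1 u != h' u).
      rewrite (bigD1 v) //= hv; congr (_ + _); apply: eq_bigr => u hu.
      by rewrite ffunE (negbTE hu).
    have e2 : \sum_u (h1 u != h' u) = \sum_(u | u != v) (h1 u != h' u).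
      by rewrite (bigD1 v) //= ffunE !eqxx.
    by move: Ek; rewrite e1 e2 add1n => -[].
  rewrite -[k.+1]add1n; apply: dist_trans (dist_one A1) _.
  exact: IH.
Qed.


Definition ctr a b (s : bool) : 'I_(a+b+2) := if s then c1 else c0.
Definition oth a b (s : bool) : 'I_(a+b+2) := if s then c0 else c1.
Arguments ctr {a b}. Arguments oth {a b}.

Definition setl a b (s : bool) (h : colr a b) : colr a b :=
  [ffun v : 'I_(a+b+2) => if (2 <= v) && ((a + 2 <= v) == s) then h (oth s) else h v].
Definition mv a b (s : bool) (h : colr a b) : colr a b :=
  [ffun v : 'I_(a+b+2) => if v == ctr s then third (h c0) (h c1) else setl s h v].
Definition mcost a b (s : bool) (h : colr a b) := (\sum_v (h v != setl s h v)).+1.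

Lemma cenE a b (v : 'I_(a+b+2)) : cen v = if a + 2 <= v then c1 else c0.
Proof. by rewrite /cen ltnNge; case: (a + 2 <= v). Qed.

Lemma c01 a b : (c0 : 'I_(a+b+2)) != c1. Proof. by []. Qed.

Lemma leaf_neq a b (v : 'I_(a+b+2)) s : 2 <= v -> (v == ctr s) = false.
Proof. by move=> h; apply/negbTE; case: s; apply/eqP => e; move: h; rewrite e. Qed.
Lemma leaf_neqo a b (v : 'I_(a+b+2)) s : 2 <= v -> (v == oth s) = false.
Proof. by move=> h; apply/negbTE; case: s; apply/eqP => e; move: h; rewrite e. Qed.

Lemma setl_c a b s (h : colr a b) (c : 'I_(a+b+2)) : c < 2 -> setl s h c = h c.
Proof. by move=> hc; rewrite ffunE leqNgt hc. Qed.

Lemma prop_setl a b s (h : colr a b) : prop h -> prop (setl s h).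
Proof.
case=> H01 Hl; split; first by rewrite !setl_c.
move=> u hu.
have -> : setl s h (cen u) = h (cen u) by rewrite setl_c // cenE; case: ifP.
rewrite ffunE hu /= cenE; case: ((a + 2 <= u) =P s) => e.
- by rewrite e; case: s {e} => /=; rewrite // eq_sym.
- by have := Hl u hu; rewrite cenE.
Qed.

Lemma mv_c0 a b s (h : colr a b) : mv s h c0 = if s then h c0 else third (h c0) (h c1).
Proof. by rewrite ffunE; case: s => //=; rewrite setl_c. Qed.
Lemma mv_c1 a b s (h : colr a b) : mv s h c1 = if s then third (h c0) (h c1) else h c1.
Proof. by rewrite ffunE; case: s => //=; rewrite setl_c. Qed.
Lemma mv_leaf a b s (h : colr a b) (v : 'I_(a+b+2)) : 2 <= v ->
  mv s h v = if s == (a + 2 <= v) then (if s then h c0 else h c1) else h v.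
Proof.
move=> hv; rewrite !ffunE leaf_neq // hv /= eq_sym.
by case: (_ == _) => //; case: s.
Qed.
Lemma setl_leaf a b s (h : colr a b) (v : 'I_(a+b+2)) : 2 <= v ->
  (h v != setl s h v) = (s == (a + 2 <= v)) && (h v != if s then h c0 else h c1).
Proof.
move=> hv; rewrite !ffunE hv /= [s == _]eq_sym; case: ((a + 2 <= v) == s) => /=; last by rewrite eqxx.
by case: s; rewrite eq_sym.
Qed.

Lemma prop_mv a b s (h : colr a b) : prop h -> prop (mv s h).
Proof.
move=> Ph; case: (Ph) => H01 Hl; have [T0 T1] := thirdP H01.
split; first by rewrite mv_c0 mv_c1; case: s; rewrite // eq_sym.
move=> u hu; have := Hl u hu; rewrite mv_leaf // !cenE.
case: s; case: (a + 2 <= u) => /= H; rewrite ?mv_c0 ?mv_c1 /=;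
  by [] || by rewrite eq_sym.
Qed.

Lemma mv_dist a b s (h : colr a b) : prop h ->
  dist_le (col_adj (double_star a b)) h (mv s h) (mcost s h).
Proof.
move=> Ph; have Ps := prop_setl s Ph; have Pm := prop_mv s Ph.
rewrite /mcost -[(\sum_v _).+1]addn1; apply: dist_trans.
  by apply: leaves_dist; rewrite // setl_c.
apply: dist_one; apply/and3P; split; [exact/proper3P | exact/proper3P |].
case: (Ph) => H01 _; have [T0 T1] := thirdP H01.
have -> : [set x | setl s h x != mv s h x] = [set ctr s].
  apply/setP => u; rewrite !inE.
  have -> : mv s h u = if u == ctr s then third (h c0) (h c1) else setl s h u by rewrite ffunE.
  case: (u =P ctr s) => [->|_]; last by rewrite eqxx.
  by clear Ps Pm; case: s; rewrite /= setl_c // eq_sym.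
by rewrite cards1.
Qed.

Fixpoint exec a b (rt : seq bool) (h : colr a b) : colr a b :=
  if rt is s :: rt' then exec rt' (mv s h) else h.
Fixpoint rcost a b (rt : seq bool) (h : colr a b) : nat :=
  if rt is s :: rt' then mcost s h + rcost rt' (mv s h) else 0.

Lemma exec_ok a b rt (h : colr a b) : prop h ->
  prop (exec rt h) /\ dist_le (col_adj (double_star a b)) h (exec rt h) (rcost rt h).
Proof.
elim: rt h => [|s rt IH] h Ph /=; first by split => //; exact: dist_refl.
have [P1 D1] := IH _ (prop_mv s Ph); split => //.
exact: dist_trans (mv_dist s Ph) D1.
Qed.

Definition nx (s : bool) (x y : 'Z_3) := if s then x else third x y.
Definition ny (s : bool) (x y : 'Z_3) := if s then third x y else y.
Definition oc (s : bool) (x y : 'Z_3) := if s then x else y.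
Fixpoint cfin (rt : seq bool) (x y : 'Z_3) : 'Z_3 * 'Z_3 :=
  if rt is s :: rt' then cfin rt' (nx s x y) (ny s x y) else (x, y).
Fixpoint lfin (rt : seq bool) (sv : bool) (x y l : 'Z_3) : 'Z_3 :=
  if rt is s :: rt' then lfin rt' sv (nx s x y) (ny s x y) (if s == sv then oc s x y else l)
  else l.
Fixpoint lcost (rt : seq bool) (sv : bool) (x y l : 'Z_3) : nat :=
  if rt is s :: rt' then
    ((s == sv) && (l != oc s x y)) +
    lcost rt' sv (nx s x y) (ny s x y) (if s == sv then oc s x y else l)
  else 0.

Lemma exec_c a b rt (h : colr a b) :
  (exec rt h c0, exec rt h c1) = cfin rt (h c0) (h c1).
Proof. by elim: rt h => [|s rt IH] h //=; rewrite IH mv_c0 mv_c1. Qed.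

Lemma exec_l a b rt (h : colr a b) (v : 'I_(a+b+2)) : 2 <= v ->
  exec rt h v = lfin rt (a + 2 <= v) (h c0) (h c1) (h v).
Proof. by move=> hv; elim: rt h => [|s rt IH] h //=; rewrite IH mv_c0 mv_c1 mv_leaf. Qed.

Lemma rcost_l a b rt (h : colr a b) :
  rcost rt h = size rt + \sum_(v : 'I_(a+b+2)) (2 <= v) * lcost rt (a + 2 <= v) (h c0) (h c1) (h v).
Proof.
elim: rt h => [|s rt IH] h /=; first by rewrite big1 // => v _; rewrite muln0.
rewrite IH /mcost.
have -> : \sum_v (h v != setl s h v) =
   \sum_(v : 'I_(a+b+2)) (2 <= v) * ((s == (a + 2 <= v)) && (h v != oc s (h c0) (h c1))).
  apply: eq_bigr => v _; case: (leqP 2 v) => hv.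
    by rewrite mul1n setl_leaf.
  by rewrite mul0n setl_c // eqxx.
have -> : \sum_(v : 'I_(a+b+2)) (2 <= v) * lcost rt (a + 2 <= v) (mv s h c0) (mv s h c1) (mv s h v) =
  \sum_(v : 'I_(a+b+2)) (2 <= v) * lcost rt (a + 2 <= v) (nx s (h c0) (h c1)) (ny s (h c0) (h c1))
        (if s == (a + 2 <= v) then oc s (h c0) (h c1) else h v).
  apply: eq_bigr => v _; case: (leqP 2 v) => hv; last by rewrite !mul0n.
  by rewrite mv_c0 mv_c1 mv_leaf.
rewrite [X in _ = _ + X](eq_bigr (fun v : 'I_(a+b+2) =>
   (2 <= v) * ((s == (a + 2 <= v)) && (h v != oc s (h c0) (h c1))) +
   (2 <= v) * lcost rt (a + 2 <= v) (nx s (h c0) (h c1)) (ny s (h c0) (h c1))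
        (if s == (a + 2 <= v) then oc s (h c0) (h c1) else h v))); last by move=> v _; rewrite mulnDr.
rewrite big_split /=; lia.
Qed.

Definition tot a b rt (f g : colr a b) := rcost rt f + \sum_v (exec rt f v != g v).

Lemma route_dist a b rt (f g : colr a b) : prop f -> prop g ->
  cfin rt (f c0) (f c1) = (g c0, g c1) ->
  dist_le (col_adj (double_star a b)) f g (tot rt f g).
Proof.
move=> Pf Pg E; have [Pe De] := exec_ok rt Pf.
apply: dist_trans De _; apply: leaves_dist => //.
- by have := exec_c rt f; rewrite E => -[].
- by have := exec_c rt f; rewrite E => -[].
Qed.

Lemma tot_l a b rt (f g : colr a b) :
  cfin rt (f c0) (f c1) = (g c0, g c1) ->
  tot rt f g = size rt + \sum_(v : 'I_(a+b+2)) (2 <= v) *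
     (lcost rt (a + 2 <= v) (f c0) (f c1) (f v) +
      (lfin rt (a + 2 <= v) (f c0) (f c1) (f v) != g v)).
Proof.
move=> E; rewrite /tot rcost_l.
have -> : \sum_v (exec rt f v != g v) = \sum_(v : 'I_(a+b+2)) (2 <= v) *
      (lfin rt (a + 2 <= v) (f c0) (f c1) (f v) != g v).
  apply: eq_bigr => v _.
  case: (leqP 2 v) => hv; first by rewrite mul1n exec_l.
  have := exec_c rt f; rewrite E => -[e0 e1].
  rewrite mul0n; apply/eqP; rewrite eqb0 negbK.
  move: hv; case: v => [[|[|m]] Hm] // _.
  - by rewrite (_ : Ordinal Hm = c0) ?e0 //; apply: val_inj.
  - by rewrite (_ : Ordinal Hm = c1) ?e1 //; apply: val_inj.
rewrite [X in _ = _ + X](eq_bigr (fun v : 'I_(a+b+2) =>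
   (2 <= v) * lcost rt (a + 2 <= v) (f c0) (f c1) (f v) +
   (2 <= v) * (lfin rt (a + 2 <= v) (f c0) (f c1) (f v) != g v))); last by move=> v _; rewrite mulnDr.
rewrite big_split /=; lia.
Qed.


Fixpoint alt (s : bool) (k : nat) : seq bool :=
  if k is k'.+1 then s :: alt (~~ s) k' else [::].
Definition dplus (x y x' y' : 'Z_3) :=
  find (fun k => cfin (alt false k) x y == (x', y')) (iota 0 6).
Definition R1 d := if d == 0 then [::] else if d == 1 then alt false 1
  else if d == 5 then alt true 1 else alt false d.
Definition R2 d := if d == 0 then [::] else if d == 1 then alt false 1
  else if d == 5 then alt true 1 else alt true (6 - d).
Definition kind (d : nat) : nat := if d == 0 then 0 else if d == 1 then 1 else if d == 5 then 2 else 3.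
Definition Wf (k : nat) (s : bool) : nat :=
  match k with 0 => 2 | 1 => if s then 2 else 4 | 2 => if s then 4 else 2 | _ => 3 end.
Definition Lk (k : nat) : nat := match k with 0 => 0 | 1 => 2 | 2 => 2 | _ => 6 end.

Definition wsum rt1 rt2 s x y l gv :=
  lcost rt1 s x y l + (lfin rt1 s x y l != gv) + (lcost rt2 s x y l + (lfin rt2 s x y l != gv)).

Definition ok_case (x y x' y' : 'Z_3) : bool :=
  let d := dplus x y x' y' in
  [&& cfin (R1 d) x y == (x', y'), cfin (R2 d) x y == (x', y'),
      size (R1 d) + size (R2 d) == Lk (kind d) &
      allB (fun s => allZ3 (fun l => allZ3 (fun gv =>
        ((l != if s then y else x) && (gv != if s then y' else x')) ==>
        (wsum (R1 d) (R2 d) s x y l gv <= Wf (kind d) s))))].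

Lemma ok_all : allZ3 (fun x => allZ3 (fun y => allZ3 (fun x' => allZ3 (fun y' =>
  ((x != y) && (x' != y')) ==> ok_case x y x' y')))).
Proof. vm_compute. reflexivity. Qed.

Lemma count_range N lo hi : \sum_(i < N) (lo <= i < hi) = minn hi N - lo.
Proof.
elim: N => [|N IH]; first by rewrite big_ord0; lia.
rewrite big_ord_recr /= IH.
case: (lo <= N) /idP; case: (N < hi) /idP => /=; lia.
Qed.

Lemma leaf_sum a b (W : bool -> nat) :
  \sum_(v : 'I_(a+b+2)) (2 <= v) * W (a + 2 <= v) = W false * a + W true * b.
Proof.
rewrite (eq_bigr (fun v : 'I_(a+b+2) => W false * (2 <= v < a + 2) + W true * (a + 2 <= v < a + b + 2))).
  rewrite big_split /= -!big_distrr /= !count_range; congr (_ * _ + _ * _); lia.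
move=> v _; have := ltn_ord v.
case: (leqP 2 v) => h2; case: (leqP (a+2) v) => h3 /= hv; rewrite ?hv /=; lia.
Qed.

Lemma okP (x y x' y' : 'Z_3) : x != y -> x' != y' -> ok_case x y x' y'.
Proof.
move=> H1 H2.
by move: (allZ3P (allZ3P (allZ3P (allZ3P ok_all x) y) x') y'); rewrite H1 H2.
Qed.

Lemma upper a b (f g : colr a b) : a <= b + 4 -> b <= a + 4 -> prop f -> prop g ->
  dist_le (col_adj (double_star a b)) f g ((3 * (a + b + 2)) %/ 2).
Proof.
move=> hab hba Pf Pg.
have := okP (proj1 Pf) (proj1 Pg).
rewrite /ok_case; set d := dplus _ _ _ _.
case/and4P=> /eqP E1 /eqP E2 /eqP EL HW.
have D1 := route_dist Pf Pg E1; have D2 := route_dist Pf Pg E2.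
have Hsum : tot (R1 d) f g + tot (R2 d) f g <=
    Lk (kind d) + (Wf (kind d) false * a + Wf (kind d) true * b).
  rewrite (tot_l E1) (tot_l E2) -leaf_sum.
  rewrite addnACA EL leq_add2l -big_split /= leq_sum // => v _.
  rewrite -mulnDr; case: (leqP 2 v) => hv; last by rewrite !mul0n.
  rewrite !mul1n.
  have := allZ3P (allZ3P (allBP HW (a + 2 <= v)) (f v)) (g v).
  have Hf := (proj2 Pf) v hv; have Hg := (proj2 Pg) v hv.
  rewrite !cenE in Hf Hg.
  rewrite /wsum; case: (a + 2 <= v) Hf Hg => /= -> -> /=; by rewrite addnA.
have Hk : Lk (kind d) + (Wf (kind d) false * a + Wf (kind d) true * b)
     <= 2 * ((3 * (a + b + 2)) %/ 2) + 1.
  rewrite /kind; case: (d == 0); [|case: (d == 1); [|case: (d == 5)]]; rewrite /=; lia.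
case: (leqP (tot (R1 d) f g) ((3 * (a + b + 2)) %/ 2)) => h1.
  exact: dist_mono h1 D1.
apply: dist_mono D2; lia.
Qed.


Definition fB2 a b (h : colr a b) :=
  (h c0 == z2) && [forall v : 'I_(a+b+2), (a + 2 <= v) ==> (h v == z2)].
Definition fB1 a b (h : colr a b) :=
  (h c0 == z1) && [forall v : 'I_(a+b+2), (a + 2 <= v) ==> (h v == z1)].
Definition fA0 a b (h : colr a b) :=
  (h c1 == z0) && [forall v : 'I_(a+b+2), (2 <= v < a + 2) ==> (h v == z0)].
Definition fA2 a b (h : colr a b) :=
  (h c1 == z2) && [forall v : 'I_(a+b+2), (2 <= v < a + 2) ==> (h v == z2)].

Definition Inv (x y : 'Z_3) (b2 a0 a2 b1 : bool) :=
  [&& ((x == z2) && (y == z0)) ==> (b2 || (a2 && b1)),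
      ((x == z1) && (y == z0)) ==> ((b2 && a0) || (a2 && b1)) &
      ((x == z1) && (y == z2)) ==> (a2 || (b2 && a0))].

Lemma inv0_fact : allZ3 (fun x => allZ3 (fun x' => allZ3 (fun y =>
  allB (fun b2 => allB (fun a0 => allB (fun a2 => allB (fun b1 =>
  [&& x != y, x' != y, x != x' & Inv x y b2 a0 a2 b1] ==>
  Inv x' y b2 (a0 || (y == z0)) (a2 || (y == z2)) b1))))))).
Proof. by vm_compute. Qed.
Lemma inv1_fact : allZ3 (fun x => allZ3 (fun y => allZ3 (fun y' =>
  allB (fun b2 => allB (fun a0 => allB (fun a2 => allB (fun b1 =>
  [&& x != y, x != y', y != y' & Inv x y b2 a0 a2 b1] ==>
  Inv x y' (b2 || (x == z2)) a0 a2 (b1 || (x == z1))))))))).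
Proof. by vm_compute. Qed.

Lemma inv_mono x y (b2 a0 a2 b1 b2' a0' a2' b1' : bool) :
  Inv x y b2 a0 a2 b1 -> b2 ==> b2' -> a0 ==> a0' -> a2 ==> a2' -> b1 ==> b1' ->
  Inv x y b2' a0' a2' b1'.
Proof.
rewrite /Inv; move: (x == z2) (y == z0) (x == z1) (y == z2) => [] [] [] [];
by case: b2 b2' a0 a0' a2 a2' b1 b1' => [] [] [] [] [] [] [] [].
Qed.

Lemma step_inv a b (h h' : colr a b) b2 a0 a2 b1 :
  col_adj (double_star a b) h h' -> Inv (h c0) (h c1) b2 a0 a2 b1 ->
  Inv (h' c0) (h' c1) (b2 || fB2 h') (a0 || fA0 h') (a2 || fA2 h') (b1 || fB1 h').
Proof.
case/and3P => /proper3P Ph /proper3P Ph' /cards1P [w Hw].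
have same u : u != w -> h' u = h u.
  move=> hu; apply/eqP; rewrite eq_sym; apply: contraNT hu => hne.
  have : u \in [set x | h x != h' x] by rewrite inE.
  by rewrite Hw in_set1.
have diffw : h w != h' w by have : w \in [set w] := set11 w; rewrite -Hw inE.
case: Ph => H01 Hl; case: Ph' => H01' Hl'.
case: (leqP 2 w) => hw.
- have e0 : h' c0 = h c0 by apply: same; apply/eqP => e; move: hw; rewrite -e.
  have e1 : h' c1 = h c1 by apply: same; apply/eqP => e; move: hw; rewrite -e.
  rewrite e0 e1 => I; apply: (inv_mono I); by apply/implyP => ->.
- have [ew|ew] : w = c0 \/ w = c1.
    by case: w hw {Hw same diffw} => [[|[|?]] ?] // _; [left|right]; apply: val_inj.
  + subst w.
    have e1 : h' c1 = h c1 by apply: same.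
    have Aleaf (u : 'I_(a+b+2)) : 2 <= u < a + 2 -> h' u = h' c1.
      case/andP=> u2 ua; have hu := Hl u u2; have hu' := Hl' u u2.
      rewrite /cen ua in hu hu'.
      have su : h' u = h u by apply: same; apply/eqP => e; move: u2; rewrite e.
      apply: (threeP diffw); [by rewrite su | by [] | by rewrite e1 eq_sym | by rewrite eq_sym].
    move=> I.
    have := allBP (allBP (allBP (allBP (allZ3P (allZ3P (allZ3P inv0_fact (h c0)) (h' c0)) (h c1)) b2) a0) a2) b1.
    rewrite H01 -e1 H01' e1 diffw I /= => J.
    apply: (inv_mono J).
    * by apply/implyP => ->.
    * apply/implyP; case/orP => [->//| /eqP hz]; apply/orP; right.
      rewrite /fA0 e1 hz eqxx /=; apply/forallP => u; apply/implyP => hu.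
      by rewrite Aleaf // e1 hz.
    * apply/implyP; case/orP => [->//| /eqP hz]; apply/orP; right.
      rewrite /fA2 e1 hz eqxx /=; apply/forallP => u; apply/implyP => hu.
      by rewrite Aleaf // e1 hz.
    * by apply/implyP => ->.
  + subst w.
    have e0 : h' c0 = h c0 by apply: same.
    have Bleaf (u : 'I_(a+b+2)) : a + 2 <= u -> h' u = h' c0.
      move=> ua; have u2 : 2 <= u by apply: leq_trans ua; rewrite leq_addl.
      have hu := Hl u u2; have hu' := Hl' u u2.
      rewrite cenE ua in hu hu'.
      have su : h' u = h u by apply: same; apply/eqP => e; move: u2; rewrite e.
      apply: (threeP diffw); [by rewrite su | by [] | by rewrite e0 | by []].
    move=> I.
    have := allBP (allBP (allBP (allBP (allZ3P (allZ3P (allZ3P inv1_fact (h c0)) (h c1)) (h' c1)) b2) a0) a2) b1.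
    rewrite H01 -e0 H01' e0 diffw I /= => J.
    apply: (inv_mono J).
    * apply/implyP; case/orP => [->//| /eqP hz]; apply/orP; right.
      rewrite /fB2 e0 hz eqxx /=; apply/forallP => u; apply/implyP => hu.
      by rewrite Bleaf // e0 hz.
    * by apply/implyP => ->.
    * by apply/implyP => ->.
    * apply/implyP; case/orP => [->//| /eqP hz]; apply/orP; right.
      rewrite /fB1 e0 hz eqxx /=; apply/forallP => u; apply/implyP => hu.
      by rewrite Bleaf // e0 hz.
Qed.


Lemma walk_inv a b (p : seq (colr a b)) (h : colr a b) b2 a0 a2 b1 :
  path (col_adj (double_star a b)) h p -> Inv (h c0) (h c1) b2 a0 a2 b1 ->
  Inv (last h p c0) (last h p c1) (b2 || has (@fB2 a b) p) (a0 || has (@fA0 a b) p)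
      (a2 || has (@fA2 a b) p) (b1 || has (@fB1 a b) p).
Proof.
elim: p h b2 a0 a2 b1 => [|h' p IH] h b2 a0 a2 b1 /=; first by rewrite !orbF.
case/andP=> A P I; rewrite !orbA; apply: IH => //; exact: step_inv A I.
Qed.

Fixpoint chg a b (v : 'I_(a+b+2)) (h : colr a b) (p : seq (colr a b)) : nat :=
  if p is h' :: p' then (h v != h' v) + chg v h' p' else 0.

Lemma size_chg a b (p : seq (colr a b)) h :
  path (col_adj (double_star a b)) h p -> size p = \sum_v chg v h p.
Proof.
elim: p h => [|h' p IH] h /=; first by rewrite big1.
case/andP=> /and3P [_ _ /eqP C] P; rewrite big_split /= -IH //.
by rewrite (sum_card (fun v => h v != h' v)) C.
Qed.

Lemma neq_tri (T : eqType) (x y z : T) : (x != z) <= (x != y) + (y != z).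
Proof.
case: (x =P y) => [->|_] /=; first by rewrite add0n.
by case: (x != z); case: (y != z).
Qed.

Lemma chg_ge a b (v : 'I_(a+b+2)) (p : seq (colr a b)) h y :
  y \in h :: p -> (h v != y v) + (y v != (last h p) v) <= chg v h p.
Proof.
elim: p h y => [|h' p IH] h y /=; first by rewrite inE => /eqP ->; rewrite eqxx.
rewrite inE => /orP [/eqP ->|yin].
- rewrite eqxx add0n; apply: leq_trans (neq_tri _ (h' v) _) _.
  rewrite leq_add2l; have := IH h' h' (mem_head _ _); by rewrite eqxx add0n.
- apply: leq_trans (leq_add (neq_tri _ (h' v) _) (leqnn _)) _.
  by rewrite -addnA leq_add2l; apply: IH.
Qed.


Definition fL a b : colr a b := [ffun v : 'I_(a+b+2) =>
  if val v == 0 then z0 else if val v == 1 then z1 else if v < a + 2 then z1 else z0].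
Definition gL a b : colr a b := [ffun v : 'I_(a+b+2) =>
  if val v == 0 then z1 else if val v == 1 then z0 else
  if v < a + 2 then (if v < (a + b) %/ 2 + 2 then z2 else z0)
  else (if v < (a + b) %/ 2 + 2 then z1 else z2)].

Lemma fL_c0 a b : fL a b c0 = z0. Proof. by rewrite ffunE. Qed.
Lemma fL_c1 a b : fL a b c1 = z1. Proof. by rewrite ffunE. Qed.
Lemma gL_c0 a b : gL a b c0 = z1. Proof. by rewrite ffunE. Qed.
Lemma gL_c1 a b : gL a b c1 = z0. Proof. by rewrite ffunE. Qed.
Lemma fL_leaf a b (v : 'I_(a+b+2)) : 2 <= v -> fL a b v = if a + 2 <= v then z0 else z1.
Proof. rewrite ffunE; case: v => [[|[|k]] ?] //= _; rewrite ltnNge; by case: (a + 2 <= _). Qed.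
Lemma gL_leaf a b (v : 'I_(a+b+2)) : 2 <= v -> gL a b v =
  if a + 2 <= v then (if v < (a + b) %/ 2 + 2 then z1 else z2)
  else (if v < (a + b) %/ 2 + 2 then z2 else z0).
Proof. rewrite ffunE; case: v => [[|[|k]] ?] //= _; rewrite ltnNge; by case: (a + 2 <= _). Qed.

Lemma prop_fL a b : prop (fL a b).
Proof.
split; first by rewrite fL_c0 fL_c1.
move=> v hv; rewrite fL_leaf // cenE; case: (a + 2 <= v); by rewrite ?fL_c0 ?fL_c1.
Qed.
Lemma prop_gL a b : prop (gL a b).
Proof.
split; first by rewrite gL_c0 gL_c1.
move=> v hv; rewrite gL_leaf // cenE; case: (a + 2 <= v); rewrite ?gL_c0 ?gL_c1;
  by case: (v < _).
Qed.

Lemma lower a b k : k < 3 * (a + b + 2) %/ 2 ->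
  ~ dist_le (col_adj (double_star a b)) (fL a b) (gL a b) k.
Proof.
move=> hk [p [Hp Hl Hs]].
set m := (a + b) %/ 2.
have I0 : Inv (fL a b c0) (fL a b c1) false false false false by rewrite fL_c0 fL_c1.
have := walk_inv Hp I0; rewrite Hl gL_c0 gL_c1 /= => /and3P [_ H _].
have Sz := size_chg Hp.
case/orP: H => /andP [/hasP [h1 h1p F1] /hasP [h2 h2p F2]].
- have key (v : 'I_(a+b+2)) : 1 + (0 <= v < 1) + (2 <= v < m + 2) <= chg v (fL a b) p.
    case/andP: F1 => /eqP F1c /forallP F1l; case/andP: F2 => /eqP F2c /forallP F2l.
    case: (leqP 2 v) => hv.
    + have r0 : (0 <= v < 1) = false by apply/negbTE; lia.
      case: (leqP (a + 2) v) => hs.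
      * apply: leq_trans (chg_ge v (y := h1) _); last by rewrite inE h1p orbT.
        rewrite Hl fL_leaf // gL_leaf // hs (eqP (implyP (F1l v) hs)) r0 /= -/m.
        by case: (v < m + 2).
      * have hA : 2 <= v < a + 2 by rewrite hv hs.
        apply: leq_trans (chg_ge v (y := h2) _); last by rewrite inE h2p orbT.
        rewrite Hl fL_leaf // gL_leaf // (_ : (a + 2 <= v) = false); last by rewrite leqNgt hs. rewrite (eqP (implyP (F2l v) hA)) r0 /= -/m.
        by case: (v < m + 2).
    + case: v hv => [[|[|?]] Hv] //= _.
      * rewrite (_ : Ordinal Hv = c0); last by apply: val_inj.
        apply: leq_trans (chg_ge c0 (y := h1) _); last by rewrite inE h1p orbT.
        by rewrite Hl fL_c0 gL_c0 F1c.
      * rewrite (_ : Ordinal Hv = c1); last by apply: val_inj.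
        apply: leq_trans (chg_ge c1 (y := fL a b) _); last by rewrite mem_head.
        by rewrite Hl fL_c1 gL_c1.
  have : \sum_(v : 'I_(a+b+2)) (1 + (0 <= v < 1) + (2 <= v < m + 2)) <= size p.
    by rewrite Sz; apply: leq_sum => v _; apply: key.
  have -> : \sum_(v : 'I_(a+b+2)) (1 + (0 <= v < 1) + (2 <= v < m + 2)) =
    a + b + 2 + (minn 1 (a + b + 2) - 0) + (minn (m + 2) (a + b + 2) - 2).
    by rewrite big_split big_split !count_range sum1_card card_ord.
  have : m <= a + b by rewrite /m; lia.
  rewrite /m; lia.
- have key (v : 'I_(a+b+2)) : 1 + (1 <= v < 2) + (m + 2 <= v < a + b + 2) <= chg v (fL a b) p.
    case/andP: F1 => /eqP F1c /forallP F1l; case/andP: F2 => /eqP F2c /forallP F2l.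
    have vN := ltn_ord v.
    case: (leqP 2 v) => hv.
    + have r0 : (1 <= v < 2) = false by apply/negbTE; lia.
      rewrite ?andbF vN andbT.
      case: (leqP (a + 2) v) => hs.
      * apply: leq_trans (chg_ge v (y := h2) _); last by rewrite inE h2p orbT.
        rewrite Hl fL_leaf // gL_leaf // hs (eqP (implyP (F2l v) hs)) /= -/m.
        by rewrite [m + 2 <= v]leqNgt; case: (v < m + 2).
      * have hA : 2 <= v < a + 2 by rewrite hv hs.
        apply: leq_trans (chg_ge v (y := h1) _); last by rewrite inE h1p orbT.
        rewrite Hl fL_leaf // gL_leaf // (_ : (a + 2 <= v) = false); last by rewrite leqNgt hs. rewrite (eqP (implyP (F1l v) hA)) /= -/m.
        by rewrite [m + 2 <= v]leqNgt; case: (v < m + 2).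
    + case: v hv vN => [[|[|?]] Hv] //= _ _.
      * rewrite (_ : Ordinal Hv = c0); last by apply: val_inj.
        apply: leq_trans (chg_ge c0 (y := fL a b) _); last by rewrite mem_head.
        by rewrite Hl fL_c0 gL_c0 addn2.
      * rewrite (_ : Ordinal Hv = c1); last by apply: val_inj.
        apply: leq_trans (chg_ge c1 (y := h1) _); last by rewrite inE h1p orbT.
        by rewrite Hl fL_c1 gL_c1 F1c addn2.
  have : \sum_(v : 'I_(a+b+2)) (1 + (1 <= v < 2) + (m + 2 <= v < a + b + 2)) <= size p.
    by rewrite Sz; apply: leq_sum => v _; apply: key.
  have -> : \sum_(v : 'I_(a+b+2)) (1 + (1 <= v < 2) + (m + 2 <= v < a + b + 2)) =
    a + b + 2 + (minn 2 (a + b + 2) - 1) + (minn (a + b + 2) (a + b + 2) - (m + 2)).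
    by rewrite big_split big_split !count_range sum1_card card_ord.
  have : m <= a + b by rewrite /m; lia.
  rewrite /m; lia.
Qed.


Theorem mainTheorem18 (a b : nat) :
  1 <= a -> 1 <= b -> a <= b + 4 -> b <= a + 4 ->
  diam_eq (proper3 (double_star a b)) (col_adj (double_star a b))
          ((3 * (a + b + 2)) %/ 2).
Proof.
move=> _ _ hab hba; split.
- move=> x y Px Py; apply: upper => //; exact/proper3P.
- exists (fL a b), (gL a b); split; [exact/proper3P/prop_fL | exact/proper3P/prop_gL | ].
  move=> k hk; exact: lower.
Qed.
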